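(* Let $d\in\{1,2,3\}$, $\Omega=\mathbb{T}^d$, $C\ge1$, let $K\subset\mathbb{Z}^d$, and for $k\in K$ let $\Lambda_\theta(k)=\mathrm{diag}(\lambda_{\theta,1}(k),\ldots,\lambda_{\theta,C}(k))$ ($\lambda_{\theta,c}(k)\in\mathbb{C}$), $M_\theta(k)\in\mathbb{C}^{C\times C}$, $F(k)\in[0,1]$; let $\alpha_g,\alpha_w\ge0$, let $G_\theta,W_\theta$ be maps on feature fields and $\sigma$ a pointwise nonlinearity. For $\delta t>0$ define the block map $\Psi_\theta(\cdot;\delta t)$ on $v\in L^2(\Omega;\mathbb{R}^C)$ by: $g=\alpha_gG_\theta(v)$, $$\widehat{v^{\mathrm{etd}}}(k)=\exp(\delta t\Lambda_\theta(k))\hat v(k)+\delta t\,\phi_1(\delta t\Lambda_\theta(k))F(k)M_\theta(k)\hat g(k)\ (k\in K),\quad \widehat{v^{\mathrm{etd}}}(k)=0\ (k\notin K),$$ $\Psi_\theta(v;\delta t)=\sigma(v^{\mathrm{etd}}+\alpha_wW_\theta(v))$. Assume: (1) there is $\omega\le0$ with $\mathrm{Re}(\lambda_{\theta,c}(k))\le\omega$ for all $k\in K$, $c$; (2) for some $R>0$ and $\mathcal{V}_R=\{v:\|v\|_{L^2}\le R\}$, the pointwise maps $\mathrm{Lift}_\theta,\mathrm{Proj}_\theta,G_\theta,W_\theta$ are Lipschitz on $\mathcal{V}_R$ in $L^2$ with constants $L_{\mathrm{lift}},L_{\mathrm{proj}},L_G,L_W$, $\sigma$ is $L_\sigma$-Lipschitz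 on the relevant range, and $\sup_{k\in K}\|M_\theta(k)\|_2\le M$; (3) truncation to $K$ and masking by $F$ do not increase the $L^2$ norm. Let $$q(\delta t)=L_\sigma\Big(e^{\omega\delta t}+\delta t\,\phi_1(\omega\delta t)\,\alpha_gML_G+\alpha_wL_W\Big).$$ Then: (a) if $q(\delta t)\le1$, the block is nonexpansive on $\mathcal{V}_R$: $\|\Psi_\theta(v;\delta t)-\Psi_\theta(w;\delta t)\|_{L^2}\le\|v-w\|_{L^2}$ for $v,w\in\mathcal{V}_R$; (b) for a fixed $\Delta t_{\mathrm{data}}>0$, an integer $L\ge1$ and $\delta t=\Delta t_{\mathrm{data}}/L$, for all $v,w$ such that $\Psi_\theta^j(v),\Psi_\theta^j(w)\in\mathcal{V}_R$ for $j=0,\ldots,L-1$ (with $\Psi_\theta=\Psi_\theta(\cdot;\delta t)$), $$\|(\Psi_\theta)^L(v)-(\Psi_\theta)^L(w)\|_{L^2}\le q(\Delta t_{\mathrm{data}}/L)^L\|v-w\|_{L^2};$$ (c) with all other quantities fixed, decreasing $\alpha_g$ or decreasing $\alpha_w$ reduces $q(\delta t)$ (does not increase it, and strictly decreases it whenever the corresponding coefficient $L_\sigma\delta t\,\phi_1(\omega\delta t)ML_G$, resp. $L_\sigma L_W$, is positive).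
   Context: $\phi_1(z)=(e^z-1)/z$, $\phi_1(0)=1$, applied entrywise to diagonal matrices. The Fourier transform is normalized so that Parseval's identity holds. $\mathrm{Lift}_\theta,\mathrm{Proj}_\theta,G_\theta,W_\theta,\sigma$ act pointwise in space; Lipschitz constants of $\sigma$ are with respect to the Euclidean norm on channel vectors. $\|\cdot\|_2$ is the matrix spectral norm. $(\Psi_\theta)^L$ denotes the $L$-fold composition. *)

(* Defs.v *)
From HB Require Import structures.
From mathcomp Require Import all_boot all_order all_algebra.
From mathcomp Require Import all_classical all_reals.
From mathcomp Require Import topology normedtype sequences esum exp trigo.
From mathcomp Require Import complex.
Set Implicit Arguments. Unset Strict Implicit. Unset Printing Implicit Defensive.
Import Order.TTheory GRing.Theory Num.Theory.
Local Open Scope ring_scope.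
Local Open Scope classical_set_scope.
Local Open Scope complex_scope.

Section Defs.
Variable R : realType.

Definition cexp (z : R[i]) : R[i] :=
  let: a +i* b := z in (expR a * cos b) +i* (expR a * sin b).

Definition phi1 (z : R[i]) : R[i] := if z == 0 then 1 else (cexp z - 1) / z.
Definition phi1R (x : R) : R := if x == 0 then 1 else (expR x - 1) / x.

Definition cabs2 (z : R[i]) : R := let: a +i* b := z in a ^+ 2 + b ^+ 2.

Variables (d nC : nat).

Definition wavevec := 'rV[int]_d.

(* a feature field v in L^2(T^d; C^nC), given by its Fourier coefficients
   \hat v : Z^d -> C^nC (unitary normalization, Parseval holds) *)
Definition field := wavevec -> 'cV[R[i]]_nC.

Definition vnorm2 (x : 'cV[R[i]]_nC) : R := \sum_(c < nC) cabs2 (x c 0).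
Definition vnorm (x : 'cV[R[i]]_nC) : R := Num.sqrt (vnorm2 x).

Definition specnorm_le (A : 'M[R[i]]_nC) (m : R) : Prop :=
  forall x : 'cV[R[i]]_nC, vnorm (A *m x) <= m * vnorm x.

(* L^2 norm via Parseval: ||v||^2 = sum_k |\hat v(k)|^2 (possibly +oo) *)
Definition l2sq (v : field) : \bar R := \esum_(k in [set: wavevec]) (vnorm2 (v k))%:E.
Definition esqrt (x : \bar R) : \bar R :=
  match x with EFin r => (Num.sqrt r)%:E | +oo%E => +oo%E | -oo%E => 0%E end.
Definition l2norm (v : field) : \bar R := esqrt (l2sq v).

Definition fsub (v w : field) : field := fun k => v k - w k.

Definition ballR (Rad : R) : set field := [set v | (l2norm v <= Rad%:E)%E].

Definition l2_lipschitz_on (A : set field) (f : field -> field) (L : R) : Prop :=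
  forall v w, A v -> A w -> (l2norm (fsub (f v) (f w)) <= L%:E * l2norm (fsub v w))%E.

Definition etd (K : set wavevec) (lam : wavevec -> 'I_nC -> R[i])
  (Mt : wavevec -> 'M[R[i]]_nC) (F : wavevec -> R) (ag : R)
  (G : field -> field) (dt : R) (v : field) : field :=
  fun k => if `[< K k >] then
     (\col_c (cexp (dt%:C * lam k c) * v k c 0))
     + dt%:C *: (diag_mx (\row_c phi1 (dt%:C * lam k c))) *m
         ((F k)%:C *: (Mt k *m (ag%:C *: G v k)))
   else 0.

Definition preact K lam Mt F ag aw G (W : field -> field) dt (v : field) : field :=
  fun k => etd K lam Mt F ag G dt v k + aw%:C *: W v k.

Definition Psi K lam Mt F ag aw G W (sig : field -> field) dt (v : field) : field :=
  sig (preact K lam Mt F ag aw G W dt v).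

(* the relevant range of pre-activations on which sigma acts: all
   pre-activation fields produced from some v in V_R and some dt > 0 *)
Definition preact_range K lam Mt F ag aw G W (Rad : R) : set field :=
  [set u | exists dt v, 0 < dt /\ ballR Rad v /\ u = preact K lam Mt F ag aw G W dt v].

Definition qfac (Ls Lg Lw M ag aw om dt : R) : R :=
  Ls * (expR (om * dt) + dt * phi1R (om * dt) * ag * M * Lg + aw * Lw).

End Defs.

(* Main.v *)
Require Import Defs.
From HB Require Import structures.
From mathcomp Require Import all_boot all_order all_algebra.
From mathcomp Require Import all_classical all_reals.
From mathcomp Require Import topology normedtype sequences esum exp trigo.
From mathcomp Require Import complex.
From mathcomp Require Import ereal derive realfun.
From mathcomp Require Import ring lra.
Import Order.TTheory GRing.Theory Num.Theory.
Import numFieldNormedType.Exports.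
Local Open Scope ring_scope.
Local Open Scope classical_set_scope.
Local Open Scope complex_scope.

Section S.
Variable R : realType.

Lemma pw2 (p q P Q : R) : 0 < P -> 0 < Q ->
  (p + q) ^+ 2 <= (P + Q) * (p ^+ 2 / P + q ^+ 2 / Q).
Proof.
move=> P0 Q0.
have -> : (P + Q) * (p ^+ 2 / P + q ^+ 2 / Q) =
   (p + q) ^+ 2 + (p * Q - q * P) ^+ 2 / (P * Q).
  by field; apply/andP; split; rewrite gt_eqF.
by rewrite lerDl divr_ge0 ?sqr_ge0 // mulr_ge0 // ltW.
Qed.

Lemma RL (H X Y : R) : 0 <= H -> 0 <= X -> 0 <= Y ->
  (forall P Q, 0 < P -> 0 < Q -> H <= (P + Q) * (X / P + Y / Q)) ->
  Num.sqrt H <= Num.sqrt X + Num.sqrt Y.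
Proof.
move=> H0 X0 Y0 hyp.
set s := Num.sqrt X; set t := Num.sqrt Y.
have s0 : 0 <= s by apply: sqrtr_ge0.
have t0 : 0 <= t by apply: sqrtr_ge0.
have key : H <= (s + t) ^+ 2.
  apply/ler_addgt0Pr => e e0.
  pose f := e / (2 * (s + t) + 1).
  have f0 : 0 < f by rewrite divr_gt0 // ltr_wpDl // mulr_ge0 // addr_ge0.
  have := hyp (s + f) (t + f) (ltr_wpDl s0 f0) (ltr_wpDl t0 f0).
  have Xs : X = s ^+ 2 by rewrite sqr_sqrtr.
  have Yt : Y = t ^+ 2 by rewrite sqr_sqrtr.
  have h1 : X / (s + f) <= s.
    rewrite ler_pdivrMr ?ltr_wpDl // Xs; nra.
  have h2 : Y / (t + f) <= t.
    rewrite ler_pdivrMr ?ltr_wpDl // Yt; nra.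
  move=> HH; apply: (le_trans HH).
  have ef : e = f * (2 * (s + t) + 1).
    by rewrite /f divfK // gt_eqF // ltr_wpDl // mulr_ge0 // addr_ge0.
  rewrite ef.
  have : (s + f + (t + f)) * (X / (s + f) + Y / (t + f)) <= (s + f + (t + f)) * (s + t).
    apply: ler_wpM2l; last exact: lerD.
    by rewrite addr_ge0 // addr_ge0 // ltW.
  move=> HH2; apply: (le_trans HH2).
  nra.
rewrite -(@ger0_norm _ (s + t)) ?addr_ge0 // -sqrtr_sqr.
by rewrite ler_sqrt ?sqr_ge0 // .
Qed.



Lemma cabs2_ge0 (z : R[i]) : 0 <= cabs2 z.
Proof. by case: z => a b; rewrite /cabs2 addr_ge0 // sqr_ge0. Qed.

Lemma cabs2M (x y : R[i]) : cabs2 (x * y) = cabs2 x * cabs2 y.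
Proof. case: x => a b; case: y => c e; rewrite /cabs2 /=. ring. Qed.

Lemma cabs2D (x y : R[i]) P Q : 0 < P -> 0 < Q ->
  cabs2 (x + y) <= (P + Q) * (cabs2 x / P + cabs2 y / Q).
Proof.
move=> P0 Q0; case: x => a b; case: y => c e; rewrite /cabs2 /=.
have h1 := @pw2 a c P Q P0 Q0; have h2 := @pw2 b e P Q P0 Q0.
have -> : (P + Q) * ((a ^+ 2 + b ^+ 2) / P + (c ^+ 2 + e ^+ 2) / Q) =
  (P + Q) * (a ^+ 2 / P + c ^+ 2 / Q) + (P + Q) * (b ^+ 2 / P + e ^+ 2 / Q).
  by rewrite !mulrDl; ring.
exact: lerD.
Qed.

Lemma cabs2C (s : R) : cabs2 (s%:C) = s ^+ 2.
Proof. by rewrite /cabs2 /= expr0n /= addr0. Qed.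


Lemma sin_le_id (y : R) : 0 <= y -> sin y <= y.
Proof.
move=> y0.
pose g : R -> R := id - sin.
have dg (x : R) : is_derive x (1:R) g (1 - cos x).
  by apply: trigger_derive.
have cg : continuous g.
  by move=> x; apply: continuousB; [exact: cvg_id | exact: continuous_sin].
case: (eqVneq y 0) => [-> | yn0]; first by rewrite sin0.
have y0' : 0 < y by rewrite lt_def yn0.
have [c _ H] := MVT y0' (fun x _ => dg x) (continuous_subspaceT cg).
have : 0 <= g y - g 0 by rewrite H mulr_ge0 ?subr_ge0 ?cos_le1 // subr0 ltW.
rewrite /g; change (0 <= (y - sin y) - (0 - sin 0) -> sin y <= y).
by rewrite sin0 !subr0 subr_ge0.
Qed.

Lemma k_ge0 (y : R) : y <= 0 -> - (2 * y * expR y) <= 1 - expR y * expR y.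
Proof.
move=> y0.
pose k : R -> R := cst 1 - expR * expR + (cst 2 * id) * expR.
have dk (x : R) : is_derive x (1:R) k (2 * expR x * (1 + x - expR x)).
  have sE (a b : R) : a *: b = a * b by [].
  have fE : ((fun=> (2:R)) * id) x = 2 * x by [].
  apply: trigger_derive; rewrite /cst /= !sE mulr0 addr0 mulr1 fE; ring.
have ck : continuous k.
  by move=> x; apply/differentiable_continuous/derivable1_diffP; exact: (@ex_derive _ _ _ _ _ _ _ (dk x)).
case: (eqVneq y 0) => [-> | yn0]; first by rewrite expR0 !mulr0 mul0r oppr0 mulr1 subrr.
have y0' : y < 0 by rewrite lt_def eq_sym yn0.
have [c _ H] := MVT y0' (fun x _ => dk x) (continuous_subspaceT ck).
have hc : 2 * expR c * (1 + c - expR c) <= 0.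
  by rewrite mulr_ge0_le0 ?mulr_ge0 ?expR_ge0 // subr_le0 expR_ge1Dx.
have : k 0 - k y <= 0.
  by rewrite H mulr_le0_ge0 // subr_ge0 ltW.
change (1 - expR 0 * expR 0 + 2 * 0 * expR 0 - (1 - expR y * expR y + 2 * y * expR y) <= 0 -> - (2 * y * expR y) <= 1 - expR y * expR y).
rewrite expR0; lra.
Qed.

Lemma sin_sqr_le (y : R) : sin y ^+ 2 <= y ^+ 2.
Proof.
wlog y0 : y / 0 <= y.
  move=> hw; case: (lerP 0 y) => [/hw //|yn].
  by rewrite -sqrrN -sinN -[y ^+ 2]sqrrN hw // oppr_ge0 ltW.
have h1 := @sin_le_id y y0.
have h2 : - y <= sin y.
  case: (lerP y 1) => y1.
    have p2 := @pi_ge2 R.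
    have : 0 <= sin y.
      apply: sin_ge0_pi; apply/andP; split => //; lra.
    lra.
  have := sin_geN1 y; lra.
nra.
Qed.

Lemma cos_bound (b : R) : 2 * (1 - cos b) <= b ^+ 2.
Proof.
have -> : b = (b / 2) *+ 2 by rewrite mulr2n -splitr.
rewrite cos_mulr2n cos2sin2.
have := sin_sqr_le (b / 2).
move: (sin (b / 2)) => s. rewrite !mulr2n. lra.
Qed.
Lemma phi1R_ge0 (x : R) : 0 <= phi1R x.
Proof.
rewrite /phi1R; case: eqP => // /eqP xn0.
case: (ltgtP x 0) => [xl|xg|xe]; last by rewrite xe eqxx in xn0.
  by rewrite ler_ndivlMr // mul0r subr_le0 expR_le1 ltW.
apply: divr_ge0; last exact: ltW.
rewrite subr_ge0; have := expR_ge1Dx x; lra.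
Qed.

Lemma phi1R_neg (a : R) : a < 0 -> phi1R a = (expR a - 1) / a.
Proof. by move=> a0; rewrite /phi1R lt_eqF. Qed.

Lemma phi1R_mono (a x : R) : a <= x -> x <= 0 -> phi1R a <= phi1R x.
Proof.
move=> ax x0.
case: (eqVneq a x) => [-> //|anx].
have ax' : a < x by rewrite lt_def eq_sym anx.
have a0 : a < 0 by apply: lt_le_trans x0.
rewrite phi1R_neg //.
case: (eqVneq x 0) => [->|xn0].
  rewrite /phi1R eqxx ler_ndivrMr // mul1r.
  by have := expR_ge1Dx a; lra.
have x0' : x < 0 by rewrite lt_neqAle xn0.
rewrite phi1R_neg //.
set A := expR a; set X := expR x.
have XA : A = X * expR (a - x) by rewrite /A /X -expRD addrC subrK.
have f1 : X * (1 + (a - x)) <= A.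
  by rewrite XA; apply: ler_wpM2l; [exact: expR_ge0 | exact: expR_ge1Dx].
have f2 : X * (1 - x) <= 1.
  have e1 : X * expR (- x) = 1 by rewrite /X -expRD subrr expR0.
  rewrite -[X in _ <= X]e1.
  by apply: ler_wpM2l; [exact: expR_ge0 | exact: expR_ge1Dx].
have h1 : x * A <= x * (X * (1 + (a - x))) by rewrite ler_wnM2l // ltW.
have h2 : (a - x) * 1 <= (a - x) * (X * (1 - x)) by rewrite ler_wnM2l // subr_le0 ltW.
have -> : (A - 1) / a = (X - 1) / x + (x * (A - 1) - a * (X - 1)) / (a * x).
  by field; rewrite xn0 ltr0_neq0.
rewrite gerDl; apply: mulr_le0_ge0.
  lra.
by rewrite invr_ge0; nra.
Qed.

Lemma cabs2_cexp (z : R[i]) : cabs2 (cexp z) = expR (complex.Re z) ^+ 2.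
Proof.
case: z => a b; rewrite /cabs2 /= !exprMn -mulrDr addrC.
by rewrite [sin b ^+ 2 + _]addrC cos2Dsin2 mulr1.
Qed.

Lemma Re_mulC (t : R) (l : R[i]) : complex.Re (t%:C * l) = t * complex.Re l.
Proof. by case: l => a b /=; rewrite mul0r subr0. Qed.

Lemma cabs2_phi1_re (z : R[i]) : complex.Re z <= 0 ->
  cabs2 (phi1 z) <= phi1R (complex.Re z) ^+ 2.
Proof.
case: z => a b /= a0.
rewrite /phi1; case: eqP => [z0|/eqP zn0].
  move: z0 => [-> _]; rewrite /phi1R eqxx /cabs2 /=; lra.
have N0 : 0 < a ^+ 2 + b ^+ 2.
  rewrite lt_neqAle addr_ge0 ?sqr_ge0 // andbT eq_sym; apply: contra zn0.
  by rewrite paddr_eq0 ?sqr_ge0 // !sqrf_eq0 => /andP[/eqP-> /eqP->].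
rewrite /cabs2 /=.
have SC : sin b ^+ 2 = 1 - cos b ^+ 2 by rewrite sin2cos2.
have hc := cos_bound b.
move: (sin b) (cos b) SC hc => S C SC hc.
set E := expR a.
have E0 : 0 < E by apply: expR_gt0.
have -> : ((E * C - 1) * (a / (a ^+ 2 + b ^+ 2)) - (E * S - 0) * - (b / (a ^+ 2 + b ^+ 2))) ^+ 2 +
  ((E * C - 1) * - (b / (a ^+ 2 + b ^+ 2)) + (E * S - 0) * (a / (a ^+ 2 + b ^+ 2))) ^+ 2
  = ((E * C - 1) ^+ 2 + E ^+ 2 * S ^+ 2) / (a ^+ 2 + b ^+ 2).
  by field; rewrite gt_eqF.
rewrite SC.
have -> : (E * C - 1) ^+ 2 + E ^+ 2 * (1 - C ^+ 2) = (E - 1) ^+ 2 + 2 * E * (1 - C) by ring.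
case: (ltgtP a 0) => [an|ap|ae]; first last.
- rewrite ae /phi1R eqxx expr1n /E ae expR0 subrr expr0n /= add0r mulr1.
  by rewrite ae expr0n add0r in N0 *; rewrite ler_pdivrMr // mul1r.
- by rewrite ltNge a0 in ap.
rewrite phi1R_neg // expr_div_n ler_pdivrMr // -/E.
have a2 : 0 < a ^+ 2 by rewrite expr2; nra.
rewrite [in X in _ <= X]mulrAC ler_pdivlMr //.
have a20 : a / 2 <= 0 by lra.
have hk := @k_ge0 _ a20.
have EE : expR (a / 2) * expR (a / 2) = E by rewrite -expRD -splitr.
rewrite EE in hk.
have u0 : 0 < expR (a / 2) by apply: expR_gt0.
move: (expR (a / 2)) u0 EE hk => u u0 EE hk.
have h1 : 0 <= - (2 * (a / 2) * u) by nra.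
have w2 : 2 * (a / 2) * u = a * u by congr (_ * _); field.
rewrite w2 in h1 hk.
have h2 : (a * u) ^+ 2 <= (1 - E) ^+ 2 by nra.
have h3 : a ^+ 2 * E <= (1 - E) ^+ 2.
  have -> : a ^+ 2 * E = (a * u) ^+ 2 by rewrite -[in LHS]EE; ring.
  exact: h2.
have h4 : 2 * (1 - C) * (E * a ^+ 2) <= b ^+ 2 * (E * a ^+ 2).
  by apply: ler_wpM2r => //; rewrite mulr_ge0 ?sqr_ge0 // ltW.
have h5 : b ^+ 2 * (a ^+ 2 * E) <= b ^+ 2 * (1 - E) ^+ 2 by apply: ler_wpM2l; rewrite ?sqr_ge0.
have h6 : (1 - E) ^+ 2 = (E - 1) ^+ 2 by ring.
rewrite h6 in h5.

have e1 : ((E - 1) ^+ 2 + 2 * E * (1 - C)) * a ^+ 2 = (E - 1) ^+ 2 * a ^+ 2 + 2 * (1 - C) * (E * a ^+ 2) by ring.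
have e2 : (E - 1) ^+ 2 * (a ^+ 2 + b ^+ 2) = (E - 1) ^+ 2 * a ^+ 2 + b ^+ 2 * (E - 1) ^+ 2 by ring.
have e3 : b ^+ 2 * (E * a ^+ 2) = b ^+ 2 * (a ^+ 2 * E) by ring.
rewrite e1 e2; lra.
Qed.

Variable n : nat.

Lemma vnorm2_ge0 (x : 'cV[R[i]]_n) : 0 <= vnorm2 x.
Proof. by rewrite /vnorm2 sumr_ge0 // => c _; apply: cabs2_ge0. Qed.

Lemma vnorm_ge0 (x : 'cV[R[i]]_n) : 0 <= vnorm x.
Proof. exact: sqrtr_ge0. Qed.

Lemma vnormD (x y : 'cV[R[i]]_n) : vnorm (x + y) <= vnorm x + vnorm y.
Proof.
apply: RL; rewrite ?vnorm2_ge0 // => P Q P0 Q0.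
rewrite /vnorm2 !mulr_suml -big_split mulr_sumr; apply: ler_sum => c _.
by rewrite mxE cabs2D.
Qed.

Lemma vnorm_col (u : 'I_n -> R[i]) (x : 'cV[R[i]]_n) m : 0 <= m ->
  (forall c, cabs2 (u c) <= m ^+ 2) ->
  vnorm (\col_c (u c * x c 0)) <= m * vnorm x.
Proof.
move=> m0 hu; rewrite /vnorm -(@ger0_norm _ m) // -sqrtr_sqr -sqrtrM ?sqr_ge0 //.
rewrite ler_sqrt ?mulr_ge0 ?sqr_ge0 ?vnorm2_ge0 // /vnorm2 mulr_sumr.
apply: ler_sum => c _; rewrite mxE cabs2M.
by apply: ler_wpM2r; [apply: cabs2_ge0 | apply: hu].
Qed.

Lemma vnormZ (s : R) (x : 'cV[R[i]]_n) : vnorm (s%:C *: x) <= `|s| * vnorm x.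
Proof.
have -> : s%:C *: x = \col_c (s%:C * x c 0).
  by apply/matrixP => i j; rewrite !mxE (ord1 j).
by apply: vnorm_col => // c; rewrite cabs2C real_normK // num_real.
Qed.

Lemma vnorm_diag (u : 'I_n -> R[i]) (x : 'cV[R[i]]_n) m : 0 <= m ->
  (forall c, cabs2 (u c) <= m ^+ 2) ->
  vnorm (diag_mx (\row_c u c) *m x) <= m * vnorm x.
Proof.
move=> m0 hu.
have -> : diag_mx (\row_c u c) *m x = \col_c (u c * x c 0).
  by apply/matrixP => i j; rewrite mul_diag_mx !mxE (ord1 j).
exact: vnorm_col.
Qed.


Lemma cabs2_phi1 (z : R[i]) (x : R) : complex.Re z <= x -> x <= 0 ->
  cabs2 (phi1 z) <= phi1R x ^+ 2.
Proof.
move=> zx x0; apply: (le_trans (cabs2_phi1_re z (le_trans zx x0))).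
have h1 := phi1R_ge0 (complex.Re z).
have h2 := phi1R_mono _ _ zx x0.
nra.
Qed.

Section E.
Local Open Scope ereal_scope.

Lemma esqrt_ge0 (x : \bar R) : 0 <= esqrt x.
Proof. by case: x => [r| |] //=; rewrite ?leey // lee_fin sqrtr_ge0. Qed.

Lemma esqrt_le (x y : \bar R) : 0 <= x -> x <= y -> esqrt x <= esqrt y.
Proof.
case: x => [r| |] //; case: y => [s| |] //= r0 rs; rewrite ?leey //.
by rewrite lee_fin in rs *; apply: ler_wsqrtr.
Qed.

Lemma esqrt_scale (c : R) (S : \bar R) : (0 <= c)%R -> 0 <= S ->
  esqrt ((c ^+ 2)%:E * S) = c%:E * esqrt S.
Proof.
move=> c0; case: S => [r| |] //= r0.
  by rewrite (sqrtrM _ (sqr_ge0 c)) sqrtr_sqr ger0_norm.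
case: (eqVneq c 0%R) => [c00|cn0].
  have c2 : (c ^+ 2 = 0)%R by rewrite c00 expr2 mul0r.
  by rewrite c2 c00 !mul0e /= sqrtr0.
have cp : (0 < c)%R by rewrite lt_def cn0.
by rewrite !gt0_muley ?lte_fin ?exprn_gt0.
Qed.


Lemma ereal_cases (e : \bar R) : 0 <= e -> (exists2 r : R, (0 <= r)%R & e = r%:E) \/ e = +oo.
Proof. by case: e => [r| |] // r0; [left; exists r | right]. Qed.

Lemma esum_scale (T : choiceType) (c : R) (f : T -> R) : (0 <= c)%R -> (forall k, 0 <= f k)%R ->
  \esum_(k in [set: T]) (c * f k)%:E <= c%:E * \esum_(k in [set: T]) (f k)%:E.
Proof.
move=> c0 f0; apply: ge_ereal_sup => _ [X [finX _] <-] /=.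
have -> : \sum_(i \in X) (c * f i)%:E = c%:E * \sum_(i \in X) (f i)%:E.
  rewrite ge0_mule_fsumr; last by move=> i; rewrite lee_fin.
  by apply: eq_fsbigr => i _.
apply: lee_wpmul2l; first by rewrite lee_fin.
by apply: ereal_sup_ubound; exists X.
Qed.

Lemma EL (T : choiceType) (h x y : T -> R) :
  (forall k, 0 <= h k)%R -> (forall k, 0 <= x k)%R -> (forall k, 0 <= y k)%R ->
  (forall k, Num.sqrt (h k) <= Num.sqrt (x k) + Num.sqrt (y k))%R ->
  esqrt (\esum_(k in [set: T]) (h k)%:E) <=
  esqrt (\esum_(k in [set: T]) (x k)%:E) + esqrt (\esum_(k in [set: T]) (y k)%:E).
Proof.
move=> h0 x0 y0 hxy.
have pw P Q : (0 < P)%R -> (0 < Q)%R -> forall k, (h k <= (P + Q) / P * x k + (P + Q) / Q * y k)%R.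
  move=> P0 Q0 k.
  have e : h k = (Num.sqrt (h k) ^+ 2)%R by rewrite sqr_sqrtr.
  rewrite e.
  have H1 : (Num.sqrt (h k) ^+ 2 <= (Num.sqrt (x k) + Num.sqrt (y k)) ^+ 2)%R.
    have := sqrtr_ge0 (h k); have := hxy k; nra.
  apply: (le_trans H1).
  have := pw2 (Num.sqrt (x k)) (Num.sqrt (y k)) P Q P0 Q0.
  rewrite !sqr_sqrtr //.
  have -> : ((P + Q) / P * x k + (P + Q) / Q * y k = (P + Q) * (x k / P + y k / Q))%R.
    by rewrite mulrDr !mulrA [((P + Q) * x k / P)%R]mulrAC [((P + Q) * y k / Q)%R]mulrAC.
  by [].
have bnd P Q : (0 < P)%R -> (0 < Q)%R -> forall X Y,
    \esum_(k in [set: T]) (x k)%:E = X%:E -> \esum_(k in [set: T]) (y k)%:E = Y%:E ->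
    \esum_(k in [set: T]) (h k)%:E <= ((P + Q) / P * X + (P + Q) / Q * Y)%:E.
  move=> P0 Q0 X Y EX EY.
  have c1 : (0 <= (P + Q) / P)%R by rewrite divr_ge0 // ltW // addr_gt0.
  have c2 : (0 <= (P + Q) / Q)%R by rewrite divr_ge0 // ltW // addr_gt0.
  have le1 : \esum_(k in [set: T]) (h k)%:E <=
      \esum_(k in [set: T]) (((P + Q) / P * x k)%:E + ((P + Q) / Q * y k)%:E).
    by apply: le_esum => k _; rewrite -EFinD lee_fin pw.
  apply: (le_trans le1).
  rewrite esumD; last 2 first.
  - by move=> k _; rewrite lee_fin mulr_ge0.
  - by move=> k _; rewrite lee_fin mulr_ge0.
  rewrite EFinD; apply: leeD.
    by apply: (le_trans (esum_scale _ _ _ c1 x0)); rewrite EX.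
  by apply: (le_trans (esum_scale _ _ _ c2 y0)); rewrite EY.
have gx : 0 <= \esum_(k in [set: T]) (x k)%:E by apply: esum_ge0 => k _; rewrite lee_fin.
have gy : 0 <= \esum_(k in [set: T]) (y k)%:E by apply: esum_ge0 => k _; rewrite lee_fin.
have gh : 0 <= \esum_(k in [set: T]) (h k)%:E by apply: esum_ge0 => k _; rewrite lee_fin.
have [[X X0 EX]|EX] := ereal_cases _ gx; last first.
  rewrite EX /=; case: (ereal_cases _ gy) => [[Y Y0 ->]|->] /=; by rewrite leey.
have [[Y Y0 EY]|EY] := ereal_cases _ gy; last first.
  by rewrite EY EX /= leey.
have [[H H0 EH]|EH] := ereal_cases _ gh; last first.
  have := bnd 1%R 1%R ltr01 ltr01 X Y EX EY.
  by rewrite EH leNgt ltey.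
rewrite EX EY EH /= lee_fin.
apply: RL => // P Q P0 Q0.
have := bnd P Q P0 Q0 X Y EX EY; rewrite EH lee_fin => HH.
apply: (le_trans HH); rewrite le_eqVlt; apply/orP; left; apply/eqP.
by rewrite mulrDr !mulrA [((P + Q) * X / P)%R]mulrAC [((P + Q) * Y / Q)%R]mulrAC.
Qed.
End E.
End S.
Arguments pw2 {R}.
Arguments RL {R}.
Arguments cabs2_ge0 {R}.
Arguments cabs2M {R}.
Arguments cabs2D {R}.
Arguments cabs2C {R}.
Arguments sin_le_id {R}.
Arguments k_ge0 {R}.
Arguments sin_sqr_le {R}.
Arguments cos_bound {R}.
Arguments phi1R_ge0 {R}.
Arguments phi1R_neg {R}.
Arguments phi1R_mono {R}.
Arguments cabs2_cexp {R}.
Arguments Re_mulC {R}.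
Arguments cabs2_phi1_re {R}.
Arguments cabs2_phi1 {R}.
Arguments esqrt_ge0 {R}.
Arguments esqrt_le {R}.
Arguments esqrt_scale {R}.
Arguments ereal_cases {R}.
Arguments esum_scale {R}.
Arguments EL {R}.
Arguments vnorm2_ge0 {R n}.
Arguments vnorm_ge0 {R n}.
Arguments vnormD {R n}.
Arguments vnorm_col {R n}.
Arguments vnormZ {R n}.
Arguments vnorm_diag {R n}.


Section Main.
Variables (R : realType) (d nC : nat).
Local Notation fld := (field R d nC).

Lemma diff3 (V : zmodType) (a1 b1 c1 a2 b2 c2 : V) :
  (a1 + b1 + c1) - (a2 + b2 + c2) = (a1 - a2) + (b1 - b2) + (c1 - c2).
Proof. by rewrite !opprD addrACA [X in X + _ = _]addrACA. Qed.

Lemma colB n (u : 'I_n -> R[i]) (x y : 'cV[R[i]]_n) :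
  \col_c (u c * x c 0) - \col_c (u c * y c 0) = \col_c (u c * (x - y) c 0).
Proof. by apply/matrixP => i j; rewrite !mxE mulrBr. Qed.

Lemma BB n (s f a : R[i]) (D Mm : 'M[R[i]]_n) (y y' : 'cV[R[i]]_n) :
  s *: D *m (f *: (Mm *m (a *: y))) - s *: D *m (f *: (Mm *m (a *: y')))
  = s *: D *m (f *: (Mm *m (a *: (y - y')))).
Proof. by rewrite !(scalerBr, mulmxBr). Qed.

Lemma sq_le (p q : R) : 0 <= p -> p <= q -> p ^+ 2 <= q ^+ 2.
Proof. by move=> p0 pq; nra. Qed.

Lemma pointwise_bound (K : set (wavevec d)) (lam : wavevec d -> 'I_nC -> R[i])
  (Mt : wavevec d -> 'M[R[i]]_nC) (F : wavevec d -> R) (ag aw : R)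
  (G W : fld -> fld) (om M dt : R) (v w : fld) (k : wavevec d) :
  (forall k, K k -> 0 <= F k <= 1) -> 0 <= ag -> 0 <= aw -> om <= 0 ->
  (forall k c, K k -> complex.Re (lam k c) <= om) -> 0 <= M ->
  (forall k, K k -> specnorm_le (Mt k) M) -> 0 < dt ->
  vnorm (fsub (preact K lam Mt F ag aw G W dt v) (preact K lam Mt F ag aw G W dt w) k)
  <= expR (om * dt) * vnorm (fsub v w k)
     + dt * phi1R (om * dt) * ag * M * vnorm (fsub (G v) (G w) k)
     + aw * vnorm (fsub (W v) (W w) k).
Proof.
move=> HF ag0 aw0 om0 Hlam M0 HM dt0.
have omdt : om * dt <= 0 by rewrite mulr_le0_ge0 // ltW.
have al0 : 0 <= expR (om * dt) := expR_ge0 _.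
have ph0 := phi1R_ge0 (om * dt).
have be0 : 0 <= dt * phi1R (om * dt) * ag * M by rewrite !mulr_ge0 // ltW.
rewrite /fsub /preact /etd.
case: (pselect (K k)) => Kk; last first.
  rewrite (asboolF Kk) !add0r -scalerBr.
  apply: (le_trans (vnormZ _ _)); rewrite ger0_norm //.
  by rewrite lerDr addr_ge0 // mulr_ge0 // vnorm_ge0.
rewrite (asboolT Kk) diff3 colB BB -scalerBr.
apply: (le_trans (vnormD _ _)); apply: lerD; last first.
  by apply: (le_trans (vnormZ _ _)); rewrite ger0_norm.
apply: (le_trans (vnormD _ _)); apply: lerD.
  apply: vnorm_col => // c.
  rewrite cabs2_cexp Re_mulC; apply: sq_le; first exact: expR_ge0.
  by rewrite ler_expR mulrC; apply: ler_wpM2r; [exact: ltW | exact: Hlam].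
set y := G v k - G w k.
rewrite -scalemxAl.
apply: (le_trans (vnormZ _ _)); rewrite ger0_norm; last exact: ltW.
rewrite -!mulrA; apply: ler_wpM2l; first exact: ltW.
apply: (le_trans (vnorm_diag _ _ _ ph0 _)).
  move=> c; apply: cabs2_phi1 => //.
  by rewrite Re_mulC mulrC; apply: ler_wpM2r; [exact: ltW | exact: Hlam].
apply: ler_wpM2l => //.
have [F0 F1] := andP (HF k Kk).
apply: (le_trans (vnormZ _ _)); rewrite ger0_norm //.
have h4 := HM k Kk (ag%:C *: y).
have h5 := vnormZ ag y; rewrite ger0_norm // in h5.
have h6 : vnorm (Mt k *m (ag%:C *: y)) <= ag * (M * vnorm y).
  apply: (le_trans h4); rewrite mulrCA; apply: ler_wpM2l => //.
have h7 := vnorm_ge0 (Mt k *m (ag%:C *: y)).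
apply: le_trans h6; nra.
Qed.


Lemma l2scale (T : choiceType) (c : R) (f : T -> R) : 0 <= c -> (forall k, 0 <= f k) ->
  (esqrt (\esum_(k in [set: T]) (c ^+ 2 * f k)%:E) <=
   c%:E * esqrt (\esum_(k in [set: T]) (f k)%:E))%E.
Proof.
move=> c0 f0.
have g0 : (0 <= \esum_(k in [set: T]) (f k)%:E)%E by apply: esum_ge0 => k _; rewrite lee_fin.
rewrite -esqrt_scale //; apply: esqrt_le.
  by apply: esum_ge0 => k _; rewrite lee_fin mulr_ge0 ?sqr_ge0.
exact: esum_scale (sqr_ge0 c) f0.
Qed.

Lemma sqrt_sqrM (c x : R) : 0 <= c -> Num.sqrt (c ^+ 2 * x) = c * Num.sqrt x.
Proof. by move=> c0; rewrite sqrtrM ?sqr_ge0 // sqrtr_sqr ger0_norm. Qed.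

Lemma preact_l2 (K : set (wavevec d)) (lam : wavevec d -> 'I_nC -> R[i])
  (Mt : wavevec d -> 'M[R[i]]_nC) (F : wavevec d -> R) (ag aw : R)
  (G W : fld -> fld) (om M Lg Lw Rad dt : R) (v w : fld) :
  (forall k, K k -> 0 <= F k <= 1) -> 0 <= ag -> 0 <= aw -> om <= 0 ->
  (forall k c, K k -> complex.Re (lam k c) <= om) -> 0 <= M -> 0 <= Lg -> 0 <= Lw ->
  l2_lipschitz_on (ballR Rad) G Lg ->
  l2_lipschitz_on (ballR Rad) W Lw ->
  (forall k, K k -> specnorm_le (Mt k) M) -> 0 < dt ->
  ballR Rad v -> ballR Rad w ->
  (l2norm (fsub (preact K lam Mt F ag aw G W dt v) (preact K lam Mt F ag aw G W dt w))
  <= (expR (om * dt) + dt * phi1R (om * dt) * ag * M * Lg + aw * Lw)%:E * l2norm (fsub v w))%E.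
Proof.
move=> HF ag0 aw0 om0 Hlam M0 Lg0 Lw0 HG HW HM dt0 bv bw.
have PB := fun k => pointwise_bound K lam Mt F ag aw G W om M dt v w k HF ag0 aw0 om0 Hlam M0 HM dt0.
have omdt : om * dt <= 0 by rewrite mulr_le0_ge0 // ltW.
set al := expR (om * dt).
set be := dt * phi1R (om * dt) * ag * M.
have al0 : 0 <= al := expR_ge0 _.
have be0 : 0 <= be by rewrite /be !mulr_ge0 ?phi1R_ge0 // ltW.
pose a k := vnorm2 (fsub v w k).
pose g k := vnorm2 (fsub (G v) (G w) k).
pose ww k := vnorm2 (fsub (W v) (W w) k).
pose h k := vnorm2 (fsub (preact K lam Mt F ag aw G W dt v) (preact K lam Mt F ag aw G W dt w) k).
pose yy k := (be * Num.sqrt (g k) + aw * Num.sqrt (ww k)) ^+ 2.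
have a0 k : 0 <= a k by apply: vnorm2_ge0.
have g0 k : 0 <= g k by apply: vnorm2_ge0.
have w0 k : 0 <= ww k by apply: vnorm2_ge0.
have h0 k : 0 <= h k by apply: vnorm2_ge0.
have yy0 k : 0 <= yy k by apply: sqr_ge0.
have sy k : Num.sqrt (yy k) = be * Num.sqrt (g k) + aw * Num.sqrt (ww k).
  by rewrite /yy sqrtr_sqr ger0_norm // addr_ge0 // mulr_ge0 // sqrtr_ge0.
have E1 : (esqrt (\esum_(k in [set: wavevec d]) (h k)%:E) <=
    esqrt (\esum_(k in [set: wavevec d]) (al ^+ 2 * a k)%:E) +
    esqrt (\esum_(k in [set: wavevec d]) (yy k)%:E))%E.
  apply: EL => // [k|k]; first by rewrite mulr_ge0 ?sqr_ge0.
  by rewrite sqrt_sqrM // sy addrA; apply: PB.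
have E2 : (esqrt (\esum_(k in [set: wavevec d]) (yy k)%:E) <=
    esqrt (\esum_(k in [set: wavevec d]) (be ^+ 2 * g k)%:E) +
    esqrt (\esum_(k in [set: wavevec d]) (aw ^+ 2 * ww k)%:E))%E.
  apply: EL => // [k|k|k]; try by rewrite mulr_ge0 ?sqr_ge0.
  by rewrite sy !sqrt_sqrM.
have S1 := l2scale _ al a al0 a0.
have S2 := l2scale _ be g be0 g0.
have S3 := l2scale _ aw ww aw0 w0.
have NG : (esqrt (\esum_(k in [set: wavevec d]) (g k)%:E) <=
   Lg%:E * esqrt (\esum_(k in [set: wavevec d]) (a k)%:E))%E := HG v w bv bw.
have NW : (esqrt (\esum_(k in [set: wavevec d]) (ww k)%:E) <=
   Lw%:E * esqrt (\esum_(k in [set: wavevec d]) (a k)%:E))%E := HW v w bv bw.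
change (esqrt (\esum_(k in [set: wavevec d]) (h k)%:E) <=
  (al + be * Lg + aw * Lw)%:E * esqrt (\esum_(k in [set: wavevec d]) (a k)%:E))%E.
set N := esqrt (\esum_(k in [set: wavevec d]) (a k)%:E).
have N0 : (0 <= N)%E by apply: esqrt_ge0.
apply: (le_trans E1).
apply: (le_trans (leeD S1 (le_trans E2 (leeD S2 S3)))).
have T2 := lee_wpmul2l (_ : (0 <= be%:E)%E) NG.
have T3 := lee_wpmul2l (_ : (0 <= aw%:E)%E) NW.
apply: (le_trans (leeD (lexx _) (leeD (T2 _) (T3 _)))); try by rewrite lee_fin.
rewrite !muleA -!EFinM !EFinD !ge0_muleDl ?lee_fin ?addr_ge0 ?mulr_ge0 //.
  rewrite addeA; exact: lexx.
all: by [apply: ltW | apply: phi1R_ge0].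
Qed.

Lemma qfac_ge0 (Ls Lg Lw M ag aw om dt : R) : 0 <= Ls -> 0 <= Lg -> 0 <= Lw -> 0 <= M ->
  0 <= ag -> 0 <= aw -> 0 < dt -> 0 <= qfac Ls Lg Lw M ag aw om dt.
Proof.
move=> *; rewrite /qfac mulr_ge0 // !addr_ge0 ?expR_ge0 // ?mulr_ge0 ?phi1R_ge0 //.
exact: ltW.
Qed.

Lemma psi_step (K : set (wavevec d)) (lam : wavevec d -> 'I_nC -> R[i])
  (Mt : wavevec d -> 'M[R[i]]_nC) (F : wavevec d -> R) (ag aw : R)
  (G W sig : fld -> fld) (om M Ls Lg Lw Rad dt : R) (v w : fld) :
  (forall k, K k -> 0 <= F k <= 1) -> 0 <= ag -> 0 <= aw -> om <= 0 ->
  (forall k c, K k -> complex.Re (lam k c) <= om) -> 0 <= M -> 0 <= Ls -> 0 <= Lg -> 0 <= Lw ->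
  l2_lipschitz_on (ballR Rad) G Lg ->
  l2_lipschitz_on (ballR Rad) W Lw ->
  l2_lipschitz_on (preact_range K lam Mt F ag aw G W Rad) sig Ls ->
  (forall k, K k -> specnorm_le (Mt k) M) -> 0 < dt ->
  ballR Rad v -> ballR Rad w ->
  (l2norm (fsub (Psi K lam Mt F ag aw G W sig dt v) (Psi K lam Mt F ag aw G W sig dt w))
  <= (qfac Ls Lg Lw M ag aw om dt)%:E * l2norm (fsub v w))%E.
Proof.
move=> HF ag0 aw0 om0 Hlam M0 Ls0 Lg0 Lw0 HG HW Hs HM dt0 bv bw.
have r (u : fld) : ballR Rad u -> preact_range K lam Mt F ag aw G W Rad (preact K lam Mt F ag aw G W dt u).
  by move=> bu; exists dt, u.
apply: (le_trans (Hs _ _ (r v bv) (r w bw))).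
have P := preact_l2 K lam Mt F ag aw G W om M Lg Lw Rad dt v w HF ag0 aw0 om0 Hlam M0 Lg0 Lw0 HG HW HM dt0 bv bw.
apply: (le_trans (lee_wpmul2l (_ : (0 <= Ls%:E)%E) P)); first by rewrite lee_fin.
by rewrite muleA -EFinM.
Qed.

End Main.


Theorem corollary5p5 (R : realType) (d nC : nat)
  (K : set (wavevec d))
  (lam : wavevec d -> 'I_nC -> R[i])
  (Mt : wavevec d -> 'M[R[i]]_nC)
  (F : wavevec d -> R)
  (ag aw : R)
  (G W sig : field R d nC -> field R d nC)
  (om Rad Ls Lg Lw M : R) :
  (1 <= d <= 3)%N -> (1 <= nC)%N ->
  (forall k, K k -> 0 <= F k <= 1) ->
  0 <= ag -> 0 <= aw ->
  (* (1) spectral bound *)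
  om <= 0 ->
  (forall k c, K k -> complex.Re (lam k c) <= om) ->
  (* (2) Lipschitz bounds *)
  0 < Rad ->
  0 <= Ls -> 0 <= Lg -> 0 <= Lw -> 0 <= M ->
  l2_lipschitz_on (ballR Rad) G Lg ->
  l2_lipschitz_on (ballR Rad) W Lw ->
  l2_lipschitz_on (preact_range K lam Mt F ag aw G W Rad) sig Ls ->
  (forall k, K k -> specnorm_le (Mt k) M) ->
  (* (a) nonexpansiveness *)
  (forall dt, 0 < dt -> qfac Ls Lg Lw M ag aw om dt <= 1 ->
     forall v w, ballR Rad v -> ballR Rad w ->
     (l2norm (fsub (Psi K lam Mt F ag aw G W sig dt v)
                   (Psi K lam Mt F ag aw G W sig dt w))
        <= l2norm (fsub v w))%E)
  /\
  (* (b) L-fold composition *)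
  (forall (Dt : R) (L : nat), 0 < Dt -> (1 <= L)%N ->
     let dt := Dt / L%:R in
     let Ps := Psi K lam Mt F ag aw G W sig dt in
     forall v w,
       (forall j, (j < L)%N -> ballR Rad (iter j Ps v) /\ ballR Rad (iter j Ps w)) ->
       (l2norm (fsub (iter L Ps v) (iter L Ps w))
          <= ((qfac Ls Lg Lw M ag aw om dt) ^+ L)%:E * l2norm (fsub v w))%E)
  /\
  (* (c) monotonicity of q in alpha_g and alpha_w *)
  (forall dt, 0 < dt ->
     (forall ag', ag' <= ag ->
        qfac Ls Lg Lw M ag' aw om dt <= qfac Ls Lg Lw M ag aw om dt /\
        (ag' < ag -> 0 < Ls * dt * phi1R (om * dt) * M * Lg ->
           qfac Ls Lg Lw M ag' aw om dt < qfac Ls Lg Lw M ag aw om dt))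
     /\
     (forall aw', aw' <= aw ->
        qfac Ls Lg Lw M ag aw' om dt <= qfac Ls Lg Lw M ag aw om dt /\
        (aw' < aw -> 0 < Ls * Lw ->
           qfac Ls Lg Lw M ag aw' om dt < qfac Ls Lg Lw M ag aw om dt))).
Proof.
move=> _ _ HF ag0 aw0 om0 Hlam Rad0 Ls0 Lg0 Lw0 M0 HG HW Hs HM.
have step := fun dt v w => psi_step R d nC K lam Mt F ag aw G W sig om M Ls Lg Lw Rad dt v w
  HF ag0 aw0 om0 Hlam M0 Ls0 Lg0 Lw0 HG HW Hs HM.
split; [|split].
- move=> dt dt0 hq v w bv bw.
  apply: (le_trans (step dt v w dt0 bv bw)).
  rewrite -[X in (_ <= X)%E]mul1e; apply: lee_wpmul2r; first exact: esqrt_ge0.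
  by rewrite lee_fin.
- move=> Dt L Dt0 L1 dt Ps v w Hb.
  have dt0 : 0 < dt by rewrite /dt divr_gt0 // ltr0n.
  have q0 := qfac_ge0 R Ls Lg Lw M ag aw om dt Ls0 Lg0 Lw0 M0 ag0 aw0 dt0.
  suff H : forall j, (j <= L)%N ->
    (l2norm (fsub (iter j Ps v) (iter j Ps w)) <=
      ((qfac Ls Lg Lw M ag aw om dt) ^+ j)%:E * l2norm (fsub v w))%E by apply: H.
  elim=> [|j IH] hj; first by rewrite expr0 mul1e.
  have [bv bw] := Hb j hj.
  rewrite !iterS; apply: (le_trans (step dt _ _ dt0 bv bw)).
  set q := qfac Ls Lg Lw M ag aw om dt.
  have e : ((q ^+ j.+1)%:E * l2norm (fsub v w) = q%:E * ((q ^+ j)%:E * l2norm (fsub v w)))%E.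
    by rewrite exprS EFinM muleA.
  rewrite e; apply: lee_wpmul2l; first by rewrite lee_fin.
  by apply: IH; apply: ltnW.
- move=> dt dt0; split.
  + move=> ag' hag.
    have e : qfac Ls Lg Lw M ag aw om dt - qfac Ls Lg Lw M ag' aw om dt =
      (Ls * dt * phi1R (om * dt) * M * Lg) * (ag - ag') by rewrite /qfac; ring.
    have c0 : 0 <= Ls * dt * phi1R (om * dt) * M * Lg.
      by rewrite !mulr_ge0 ?phi1R_ge0 // ltW.
    split; first by rewrite -subr_ge0 e mulr_ge0 // subr_ge0.
    by move=> lt cp; rewrite -subr_gt0 e mulr_gt0 // subr_gt0.
  + move=> aw' haw.
    have e : qfac Ls Lg Lw M ag aw om dt - qfac Ls Lg Lw M ag aw' om dt =
      (Ls * Lw) * (aw - aw') by rewrite /qfac; ring.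
    split; first by rewrite -subr_ge0 e mulr_ge0 ?mulr_ge0 // subr_ge0.
    by move=> lt cp; rewrite -subr_gt0 e mulr_gt0 // subr_gt0.
Qed.
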